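(* Let $\mathcal{D}(\rho)=p_0\rho+p_1X\rho X+p_2Y\rho Y+p_3Z\rho Z$ and $\mathcal{E}(\rho)=q_0\rho+q_1X\rho X+q_2Y\rho Y+q_3Z\rho Z$ be two arbitrary single-qubit quantum Pauli channels, where $(p_i)$ and $(q_i)$ are probability vectors. The entanglement-assisted classical communication capacity of $\mathcal{D}$ and $\mathcal{E}$ over a quantum trajectory is $$C_{\text{E,Q}}=2+H(\alpha)+A_0\log_2A_0+\sum_{k=1}^3 A_k^+\log_2A_k^++\sum_{k=1}^3A_k^-\log_2A_k^-,$$ where $A_0=p_0q_0+p_1q_1+p_2q_2+p_3q_3$, $A_1^+=p_0q_1+p_1q_0$, $A_2^+=p_0q_2+p_2q_0$, $A_3^+=p_0q_3+p_3q_0$, $A_1^-=p_2q_3+p_3q_2$, $A_2^-=p_3q_1+p_1q_3$, $A_3^-=p_1q_2+p_2q_1$, $\alpha=A_0+A_1^++A_2^++A_3^+$, and $H(\alpha)=-\alpha\log_2\alpha-(1-\alpha)\log_2(1-\alpha)$ is the binary entropy.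
   Context: $X,Y,Z$ are the Pauli matrices, $\sigma_0=I,\sigma_1=X,\sigma_2=Y,\sigma_3=Z$, $|\pm\rangle=(|0\rangle\pm|1\rangle)/\sqrt2$, and $0\log_2 0=0$. For a Pauli channel $\mathcal{N}(\rho)=\sum_{i=0}^3 r_i\sigma_i\rho\sigma_i$, its entanglement-assisted classical capacity (superdense-coding capacity with a pre-shared EPR pair, equiprobable inputs) is defined as $C_E(\mathcal{N})=2+\sum_i r_i\log_2 r_i$. Quantum trajectory (quantum switch): with $D_i=\sqrt{p_i}\sigma_i$, $E_j=\sqrt{q_j}\sigma_j$, the channel acting on the data qubit $\rho$ and a control qubit $\omega=|+\rangle\langle+|$ is $\mathcal{S}_\omega(\mathcal{D},\mathcal{E})(\rho)=\sum_{i,j}W_{i,j}(\rho\otimes\omega)W_{i,j}^\dagger$ with $W_{i,j}=E_jD_i\otimes|0\rangle\langle0|+D_iE_j\otimes|1\rangle\langle1|$. Since each pair of Pauli matrices commutes or anticommutes, the output is of the form $p_{+}\,\mathcal{S}_{+}(\rho)\otimes|+\rangle\langle+|+p_{-}\,\mathcal{S}_{-}(\rho)\otimes|-\rangle\langle-|$, where the pairs $(i,j)$ with commuting $\sigma_i,\sigma_j$ contribute to the $|+\rangle$ branch and anticommuting pairs to the $|-\rangle$ branch, $p_\pm$ are the total weights of the branches and $\mathcal{S}_\pm$ are the normalized (Pauli) channels of each branch. Measuring the control in the basis $\{|+\rangle,|-\rangle\}$, the capacity over the quantum trajectory is defined as $C_{\text{E,Q}}=p_{+}C_E(\mathcal{S}_{+})+p_{-}C_E(\mathcal{S}_{-})$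 (a branch with zero probability contributes zero). *)

(* Defs.v *)
From HB Require Import structures.
From mathcomp Require Import all_boot all_order all_algebra all_field.
From mathcomp Require Import reals exp.
Set Implicit Arguments. Unset Strict Implicit. Unset Printing Implicit Defensive.
Import Order.TTheory GRing.Theory Num.Theory.
Local Open Scope ring_scope.

Definition pauli (i : 'I_4) : 'M[algC]_2 :=
  match val i with
  | 0%N => \matrix_(a < 2, b < 2) (if a == b then 1 else 0)
  | 1%N => \matrix_(a < 2, b < 2) (if a == b then 0 else 1)
  | 2%N => \matrix_(a < 2, b < 2)
             (if a == b then 0 else if (val a == 0%N) then - 'i else 'i)
  | _ => \matrix_(a < 2, b < 2)
             (if a == b then (if val a == 0%N then 1 else -1) else 0)
  end.

Definition pauli_commute (i j : 'I_4) : bool :=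
  pauli i *m pauli j == pauli j *m pauli i.

(* index k of the Pauli matrix to which E_j D_i ~ sigma_j sigma_i is
   proportional (sigma_j sigma_i = c sigma_k, equivalently
   sigma_j sigma_i sigma_k is a scalar matrix since sigma_k^2 = I) *)
Definition pauli_prod_index (i j : 'I_4) : 'I_4 :=
  odflt ord0 [pick k : 'I_4 | is_scalar_mx (pauli j *m pauli i *m pauli k)].

Definition xlog2x {R : realType} (x : R) : R :=
  if x == 0 then 0 else x * (ln x / ln 2).

Definition binH {R : realType} (a : R) : R := - xlog2x a - xlog2x (1 - a).

(* entanglement-assisted capacity of the Pauli channel with weights r *)
Definition C_E {R : realType} (r : 'I_4 -> R) : R :=
  2 + \sum_(i < 4) xlog2x (r i).

Definition is_prob_vec {R : realType} (p : 'I_4 -> R) : Prop :=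
  (forall i, 0 <= p i) /\ \sum_(i < 4) p i = 1.

(* Quantum switch of D (weights p, Kraus D_i = sqrt p_i sigma_i) and
   E (weights q): branch b = true is the |+> branch (commuting pairs),
   b = false the |-> branch (anticommuting pairs). The Kraus term
   W_ij contributes p_i q_j (sigma_j sigma_i) rho (sigma_j sigma_i)^dagger,
   and sigma_j sigma_i = c sigma_k with |c| = 1. *)
Definition branch_weight {R : realType} (p q : 'I_4 -> R) (b : bool) : R :=
  \sum_(i < 4) \sum_(j < 4 | pauli_commute i j == b) p i * q j.

Definition branch_unnorm {R : realType} (p q : 'I_4 -> R) (b : bool)
  (k : 'I_4) : R :=
  \sum_(i < 4) \sum_(j < 4 | (pauli_commute i j == b)
                              && (pauli_prod_index i j == k)) p i * q j.

Definition branch_capacity {R : realType} (p q : 'I_4 -> R) (b : bool) : R :=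
  let pb := branch_weight p q b in
  if pb == 0 then 0
  else pb * C_E (fun k => branch_unnorm p q b k / pb).

Definition C_EQ {R : realType} (p q : 'I_4 -> R) : R :=
  branch_capacity p q true + branch_capacity p q false.

(* Main.v *)
Require Import Defs.
From HB Require Import structures.
From mathcomp Require Import all_boot all_order all_algebra all_field.
From mathcomp Require Import reals exp.
From mathcomp Require Import ring lra.
Import Order.TTheory GRing.Theory Num.Theory.
Local Open Scope ring_scope.

Definition mk2 {F : nzRingType} (a b c d : F) : 'M[F]_2 :=
  \matrix_(i < 2, j < 2) if val i == 0%N then (if val j == 0%N then a else b)
                         else (if val j == 0%N then c else d).

Section G.
Variable F : fieldType.
Implicit Types a b c d e f g h : F.

Lemma mul_mk2 a b c d e f g h :
  mk2 a b c d *m mk2 e f g h =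
  mk2 (a*e+b*g) (a*f+b*h) (c*e+d*g) (c*f+d*h).
Proof.
apply/matrixP => i j; rewrite !mxE !big_ord_recl big_ord0 !mxE /=.
by case: i => [[|[|//]] ?]; case: j => [[|[|//]] ?] /=; rewrite addr0.
Qed.

Lemma eq_mk2 a b c d e f g h :
  (mk2 a b c d == mk2 e f g h) = [&& a==e, b==f, c==g & d==h].
Proof.
apply/eqP/and4P => [/matrixP H|[/eqP-> /eqP-> /eqP-> /eqP->]] //.
have := H ord0 ord0; have := H ord0 ord_max; have := H ord_max ord0;
  have := H ord_max ord_max; rewrite !mxE /= => -> -> -> ->.
by rewrite !eqxx.
Qed.

Lemma scal_mk2 x : x%:M = mk2 x 0 0 x :> 'M[F]_2.
Proof.
apply/matrixP => i j; rewrite !mxE /=.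
by case: i => [[|[|//]] ?]; case: j => [[|[|//]] ?].
Qed.

Lemma scalar_mk2 a b c d :
  is_scalar_mx (mk2 a b c d) = [&& b==0, c==0 & a==d].
Proof.
apply/is_scalar_mxP/and3P => [[x /eqP]|[/eqP-> /eqP-> /eqP->]].
  by rewrite scal_mk2 eq_mk2 => /and4P[/eqP-> -> -> /eqP->].
by exists d; rewrite scal_mk2.
Qed.

Variable I : F.
Hypothesis hI : I * I = -1.
Hypothesis h2 : (2 : F) != 0.

Definition pmk (n : nat) : 'M[F]_2 :=
  match n with
  | 0%N => mk2 1 0 0 1
  | 1%N => mk2 0 1 1 0
  | 2%N => mk2 0 (-I) I 0
  | _ => mk2 1 0 0 (-1)
  end.

Lemma eqrN' (x : F) : (x == - x) = (x == 0).
Proof. by rewrite -subr_eq0 opprK -mulr2n -mulr_natr mulf_eq0 (negbTE h2) orbF. Qed.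
Lemma eqNr' (x : F) : (- x == x) = (x == 0).
Proof. by rewrite eq_sym eqrN'. Qed.
Lemma I0 : (I == 0) = false.
Proof. apply/negbTE/eqP => H; move: hI; rewrite H mul0r => /eqP; rewrite eq_sym oppr_eq0 oner_eq0. by []. Qed.

Definition ctab (i j : nat) : bool := [|| i == 0%N, j == 0%N | i == j].
Definition xt (i j : nat) : nat :=
  if i == 0%N then j else if j == 0%N then i else if i == j then 0%N else (6 - i - j)%N.

Ltac simpC := do 3 rewrite ?(mul0r, mulr0, mul1r, mulr1, add0r, addr0);
  do 3 rewrite ?(mulrN, mulNr, opprK, hI, oppr0);
  do 3 rewrite ?(mul0r, mulr0, mul1r, mulr1, add0r, addr0, hI);
  rewrite ?eqxx; rewrite ?(eqNr', eqrN', oner_eq0, I0, oppr_eq0).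

Lemma commG (i j : 'I_4) : (pmk i *m pmk j == pmk j *m pmk i) = ctab (val i) (val j).
Proof.
by case: i => [[|[|[|[|//]]]] Hi]; case: j => [[|[|[|[|//]]]] Hj];
rewrite /= !mul_mk2 eq_mk2; simpC.
Qed.




Lemma sc_tab (i j k : 'I_4) : is_scalar_mx (pmk j *m pmk i *m pmk k) = (xt (val i) (val j) == val k).
Proof.
case: i => [[|[|[|[|//]]]] Hi]; case: j => [[|[|[|[|//]]]] Hj];
case: k => [[|[|[|[|//]]]] Hk] => /=; rewrite !mul_mk2 scalar_mk2.
all: by simpC.
Qed.
End G.

Lemma pauliE (i : 'I_4) : pauli i = @pmk _ 'i (val i).
Proof.
rewrite /pauli; case: i => [[|[|[|[|//]]]] Hi] /=;
apply/matrixP => a b; rewrite !mxE;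
by case: a => [[|[|//]] ?]; case: b => [[|[|//]] ?].
Qed.

Lemma h2C : (2 : algC) != 0.
Proof. by rewrite pnatr_eq0. Qed.

Lemma comm_tab (i j : 'I_4) : pauli_commute i j = ctab (val i) (val j).
Proof. by rewrite /pauli_commute !pauliE (@commG _ _ (@mulCii _) h2C). Qed.

Lemma xt_lt (i j : 'I_4) : (xt (val i) (val j) < 4)%N.
Proof. by case: i => [[|[|[|[|//]]]] Hi]; case: j => [[|[|[|[|//]]]] Hj]. Qed.

Lemma prod_eq (i j k : 'I_4) :
  (pauli_prod_index i j == k) = (xt (val i) (val j) == val k).
Proof.
rewrite /pauli_prod_index; case: pickP => [k' Hk|H].
  move: Hk; rewrite !pauliE (@sc_tab _ _ (@mulCii _) h2C) => /eqP ->.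
  by rewrite /= val_eqE.
have := H (Ordinal (xt_lt i j)).
by rewrite !pauliE (@sc_tab _ _ (@mulCii _) h2C) /= eqxx.
Qed.

Lemma sum4 (R : nmodType) (F : 'I_4 -> R) :
  \sum_(i < 4) F i = F ord0 + F (inord 1) + F (inord 2) + F (inord 3).
Proof.
rewrite !big_ord_recr big_ord0 /= add0r.
by congr (_ + _ + _ + _); congr F; apply/val_inj; rewrite /= ?inordK.
Qed.

Section An.
Variable R : realType.

Lemma key (s a : R) : 0 < s -> 0 <= a ->
  s * xlog2x (a / s) = xlog2x a - a * (ln s / ln 2).
Proof.
move=> s0 a0; rewrite /xlog2x.
have [->|an0] := eqVneq a 0; first by rewrite mul0r eqxx mulr0 mul0r subr0.
have ap : 0 < a by rewrite lt_def an0.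
have -> : (a / s == 0) = false by apply/negbTE; rewrite mulf_neq0 // invr_eq0 gt_eqF.
rewrite ln_div ?posrE //.
have l2 : ln (2 : R) != 0 by rewrite gt_eqF // ln_gt0 // ltr1n.
field.
by rewrite l2 gt_eqF.
Qed.

Lemma cap (a0 a1 a2 a3 s : R) : 0 <= a0 -> 0 <= a1 -> 0 <= a2 -> 0 <= a3 ->
  s = a0 + a1 + a2 + a3 ->
  (if s == 0 then 0 else
    s * (2 + (xlog2x (a0 / s) + xlog2x (a1 / s) + xlog2x (a2 / s) + xlog2x (a3 / s))))
  = 2 * s + (xlog2x a0 + xlog2x a1 + xlog2x a2 + xlog2x a3) - xlog2x s.
Proof.
move=> h0 h1 h2 h3 hs.
have [s0|sn0] := eqVneq s 0.
  have e0 : a0 = 0 by lra.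
  have e1 : a1 = 0 by lra.
  have e2 : a2 = 0 by lra.
  have e3 : a3 = 0 by lra.
  by rewrite s0 e0 e1 e2 e3 /xlog2x eqxx; lra.
have sp : 0 < s by rewrite lt_def sn0 /= hs; lra.
rewrite !mulrDr !key //.
have -> : xlog2x s = s * (ln s / ln 2) by rewrite /xlog2x (negbTE sn0).
move: (ln s / ln 2) => L; rewrite hs; ring.
Qed.
End An.

Theorem proposition2 (R : realType) (p q : 'I_4 -> R) :
  is_prob_vec p -> is_prob_vec q ->
  let p0 := p ord0 in let p1 := p (inord 1) in
  let p2 := p (inord 2) in let p3 := p (inord 3) in
  let q0 := q ord0 in let q1 := q (inord 1) in
  let q2 := q (inord 2) in let q3 := q (inord 3) in
  let A0 := p0 * q0 + p1 * q1 + p2 * q2 + p3 * q3 in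
  let A1p := p0 * q1 + p1 * q0 in
  let A2p := p0 * q2 + p2 * q0 in
  let A3p := p0 * q3 + p3 * q0 in
  let A1m := p2 * q3 + p3 * q2 in
  let A2m := p3 * q1 + p1 * q3 in
  let A3m := p1 * q2 + p2 * q1 in
  let alpha := A0 + A1p + A2p + A3p in
  C_EQ p q = 2 + binH alpha + xlog2x A0
             + (xlog2x A1p + xlog2x A2p + xlog2x A3p)
             + (xlog2x A1m + xlog2x A2m + xlog2x A3m).
Proof.
move=> [hp sp] [hq sq] p0 p1 p2 p3 q0 q1 q2 q3 A0 A1p A2p A3p A1m A2m A3m alpha.
have EW : forall b, branch_weight p q b =
   \sum_(i < 4) \sum_(j < 4) (if ctab (val i) (val j) == b then p i * q j else 0).
  move=> b; apply: eq_bigr => i _; rewrite big_mkcond; apply: eq_bigr => j _.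
  by rewrite comm_tab.
have EU : forall b k, branch_unnorm p q b k =
   \sum_(i < 4) \sum_(j < 4) (if (ctab (val i) (val j) == b) && (xt (val i) (val j) == val k) then p i * q j else 0).
  move=> b k; apply: eq_bigr => i _; rewrite big_mkcond; apply: eq_bigr => j _.
  by rewrite comm_tab prod_eq.
have Wt : branch_weight p q true = alpha.
  rewrite EW !sum4 /= !inordK //= /alpha /A0 /A1p /A2p /A3p /p0 /p1 /p2 /p3 /q0 /q1 /q2 /q3.
  ring.
have Wf : branch_weight p q false = A1m + A2m + A3m.
  rewrite EW !sum4 /= !inordK //= /A1m /A2m /A3m /p0 /p1 /p2 /p3 /q0 /q1 /q2 /q3.
  ring.
have U1 : branch_unnorm p q true ord0 = A0.
  rewrite EU !sum4 /= !inordK //= /A0 /A1p /A2p /A3p /A1m /A2m /A3m /p0 /p1 /p2 /p3 /q0 /q1 /q2 /q3.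
  ring.
have U2 : branch_unnorm p q true (inord 1) = A1p.
  rewrite EU !sum4 /= !inordK //= /A0 /A1p /A2p /A3p /A1m /A2m /A3m /p0 /p1 /p2 /p3 /q0 /q1 /q2 /q3.
  ring.
have U3 : branch_unnorm p q true (inord 2) = A2p.
  rewrite EU !sum4 /= !inordK //= /A0 /A1p /A2p /A3p /A1m /A2m /A3m /p0 /p1 /p2 /p3 /q0 /q1 /q2 /q3.
  ring.
have U4 : branch_unnorm p q true (inord 3) = A3p.
  rewrite EU !sum4 /= !inordK //= /A0 /A1p /A2p /A3p /A1m /A2m /A3m /p0 /p1 /p2 /p3 /q0 /q1 /q2 /q3.
  ring.
have U5 : branch_unnorm p q false ord0 = 0.
  rewrite EU !sum4 /= !inordK //= /A0 /A1p /A2p /A3p /A1m /A2m /A3m /p0 /p1 /p2 /p3 /q0 /q1 /q2 /q3.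
  ring.
have U6 : branch_unnorm p q false (inord 1) = A1m.
  rewrite EU !sum4 /= !inordK //= /A0 /A1p /A2p /A3p /A1m /A2m /A3m /p0 /p1 /p2 /p3 /q0 /q1 /q2 /q3.
  ring.
have U7 : branch_unnorm p q false (inord 2) = A2m.
  rewrite EU !sum4 /= !inordK //= /A0 /A1p /A2p /A3p /A1m /A2m /A3m /p0 /p1 /p2 /p3 /q0 /q1 /q2 /q3.
  ring.
have U8 : branch_unnorm p q false (inord 3) = A3m.
  rewrite EU !sum4 /= !inordK //= /A0 /A1p /A2p /A3p /A1m /A2m /A3m /p0 /p1 /p2 /p3 /q0 /q1 /q2 /q3.
  ring.
have x0 : xlog2x (0 : R) = 0 by rewrite /xlog2x eqxx.
have hA : forall i j, 0 <= p i * q j by move=> i j; apply: mulr_ge0.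
have g0 : 0 <= A0 by rewrite /A0; repeat apply: addr_ge0; apply: hA.
have g1 : 0 <= A1p by rewrite /A1p; repeat apply: addr_ge0; apply: hA.
have g2 : 0 <= A2p by rewrite /A2p; repeat apply: addr_ge0; apply: hA.
have g3 : 0 <= A3p by rewrite /A3p; repeat apply: addr_ge0; apply: hA.
have g4 : 0 <= A1m by rewrite /A1m; repeat apply: addr_ge0; apply: hA.
have g5 : 0 <= A2m by rewrite /A2m; repeat apply: addr_ge0; apply: hA.
have g6 : 0 <= A3m by rewrite /A3m; repeat apply: addr_ge0; apply: hA.
have Hpq : (p0+p1+p2+p3)*(q0+q1+q2+q3) = 1.
  by rewrite /p0 /p1 /p2 /p3 /q0 /q1 /q2 /q3 -!sum4 sp sq mulr1.
have Hs : 1 - alpha = A1m + A2m + A3m.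
  rewrite -Hpq /alpha /A0 /A1p /A2p /A3p /A1m /A2m /A3m /p0 /p1 /p2 /p3 /q0 /q1 /q2 /q3. ring.
rewrite /C_EQ /branch_capacity /C_E !sum4 Wt Wf U1 U2 U3 U4 U5 U6 U7 U8.
rewrite (@cap R _ _ _ _ _ g0 g1 g2 g3) // (@cap R _ _ _ _ _ (lexx 0) g4 g5 g6); last by rewrite add0r.
rewrite /binH Hs x0.
have -> : 2 * (A1m + A2m + A3m) = 2 * (1 - alpha) by rewrite Hs.
ring.
Qed.
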